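(* Let $\mathcal{M}=(M,\mathcal{C})$ be a transitive $\beta$-model of MK$^*$. Let $N_1,N_2\in\mathcal{C}$ and let $R_1,R_2\in\mathcal{C}$ be well-founded binary relations such that $(N_1,R_1)$ and $(N_2,R_2)$ are coding pairs. If there is an isomorphism between $(N_1,R_1)$ and $(N_2,R_2)$, then there is such an isomorphism in $\mathcal{C}$.
   Context: MK$^*$ is Morse–Kelley class theory (two-sorted models $(M,\mathcal{C})$, $M$ a transitive ZFC model, $\mathcal{C}\subseteq\mathcal{P}(M)$, with set axioms, class Foundation and Extensionality, Replacement for class functions, Class Comprehension for all two-sorted formulas, Global Choice) plus Class-Bounding $\forall x\,\exists A\,\varphi(x,A)\to\exists B\,\forall x\,\exists y\,\varphi(x,(B)_y)$ with $(B)_y=\{z:(y,z)\in B\}$. A $\beta$-model: a class is well-founded in the model iff truly well-founded. A coding pair is $(M_0,R)$ with $M_0\in\mathcal{C}$ having a distinguished element $a$ and $R\in\mathcal{C}$ a binary relation on $M_0$ such that: each $z\in M_0$ has a unique $R$-distance $n$ from $a$ (an $R$-chain $zRz_{n-1}R\cdots Rz_1Ra$); if $y\neq z$, $yRx$, $zRx$ then $(M_0,R)\restriction y\not\cong(M_0,R)\restriction z$ (restriction = the element with everything $R$-chain-connected below it); if $y\neq z$ have equal $R$-distance from $a$ then $vRy\to\neg vRz$; $R$ is well-founded. An isomorphism of coding pairs is an isomorphism of the structures $(N_1,R_1)\cong(N_2,R_2)$. *)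

(* Defs.v *)
(* Models of MK* are represented as follows:
   - the transitive ZFC model M is represented (up to Mostowski collapse) by a
     type M with a well-founded, extensional membership relation [mem];
   - the collection of classes C ⊆ P(M) is a predicate on predicates M -> Prop;
   - ordered pairs are Kuratowski pairs computed inside M. *)
From Stdlib Require Import Classical.

Definition scons {A : Type} (x : A) (e : nat -> A) : nat -> A :=
  fun n => match n with 0 => x | S k => e k end.

(* Two-sorted formulas of class theory, de Bruijn indices for set variables
   and (separately) for class variables. *)
Inductive form : Type :=
| FMem (i j : nat)
| FEq (i j : nat)
| FIn (i j : nat)        (* set_i ∈ class_j *)
| FNot (p : form)
| FAnd (p q : form)
| FAllS (p : form)
| FAllC (p : form).

Fixpoint first_order (p : form) : bool :=
  match p with
  | FMem _ _ | FEq _ _ => true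
  | FIn _ _ => false
  | FNot q => first_order q
  | FAnd q r => first_order q && first_order r
  | FAllS q => first_order q
  | FAllC _ => false
  end.

Section MK.
Variable M : Type.
Variable mem : M -> M -> Prop.
Variable C : (M -> Prop) -> Prop.

Fixpoint sat (es : nat -> M) (ec : nat -> M -> Prop) (p : form) : Prop :=
  match p with
  | FMem i j => mem (es i) (es j)
  | FEq i j => es i = es j
  | FIn i j => ec j (es i)
  | FNot q => ~ sat es ec q
  | FAnd q r => sat es ec q /\ sat es ec r
  | FAllS q => forall x : M, sat (scons x es) ec q
  | FAllC q => forall A : M -> Prop, C A -> sat es (scons A ec) q
  end.

(* p is the Kuratowski pair (x,y) = {{x},{x,y}} in M *)
Definition is_pair (x y p : M) : Prop :=
  forall w, mem w p <->
    ((forall u, mem u w <-> u = x) \/ (forall u, mem u w <-> (u = x \/ u = y))).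

Definition crel (R : M -> Prop) (x y : M) : Prop :=
  exists p, is_pair x y p /\ R p.

Definition slice (B : M -> Prop) (y : M) : M -> Prop := fun z => crel B y z.

Definition zfc_model : Prop :=
  well_founded mem /\
  (forall x y, (forall z, mem z x <-> mem z y) -> x = y) /\
  (forall a b, exists c, mem a c /\ mem b c) /\
  (forall x, exists u, forall z w, mem z w -> mem w x -> mem z u) /\
  (forall x, exists q, forall z, (forall u, mem u z -> mem u x) -> mem z q) /\
  (exists w, (exists e, mem e w /\ forall u, ~ mem u e) /\
     forall x, mem x w -> exists s, mem s w /\ forall u, mem u s <-> (mem u x \/ u = x)) /\
  (forall p es ec, first_order p = true -> forall a, exists b, forall z,
     mem z b <-> (mem z a /\ sat (scons z es) ec p)) /\
  (* replacement scheme: y is variable 0, x is variable 1 *)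
  (forall p es ec, first_order p = true -> forall a,
     (forall x, mem x a -> exists! y, sat (scons y (scons x es)) ec p) ->
     exists b, forall y, mem y b <-> exists x, mem x a /\ sat (scons y (scons x es)) ec p) /\
  (forall x, (forall y, mem y x -> exists u, mem u y) ->
     (forall y y' u, mem y x -> mem y' x -> mem u y -> mem u y' -> y = y') ->
     exists s, forall y, mem y x -> exists! u, mem u s /\ mem u y).

Definition mkstar_model : Prop :=
  zfc_model /\
  (forall A, C A -> (exists x, A x) -> exists x, A x /\ forall y, A y -> ~ mem y x) /\
  (forall A, C A -> forall a, exists b, forall z, mem z b <-> (mem z a /\ A z)) /\
  (forall F, C F -> (forall x y y', crel F x y -> crel F x y' -> y = y') ->
     forall a, exists b, forall y, mem y b <-> exists x, mem x a /\ crel F x y) /\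
  (forall p es ec, (forall i, C (ec i)) ->
     C (fun x => sat (scons x es) ec p)) /\
  (exists G, C G /\ (forall x y y', crel G x y -> crel G x y' -> y = y') /\
     forall x, (exists u, mem u x) -> exists y, crel G x y /\ mem y x) /\
  (* class bounding: x is set variable 0, A is class variable 0 *)
  (forall p es ec, (forall i, C (ec i)) ->
     (forall x, exists A, C A /\ sat (scons x es) (scons A ec) p) ->
     exists B, C B /\ forall x, exists y, sat (scons x es) (scons (slice B y) ec) p).

(* well-foundedness of a relation (given as a binary predicate) in the real world *)
Definition truly_wf (S : M -> M -> Prop) : Prop :=
  forall X : M -> Prop, (exists x, X x) -> exists x, X x /\ forall y, X y -> ~ S y x.

(* well-foundedness as evaluated inside the model: only classes in C are tested *)
Definition model_wf (S : M -> M -> Prop) : Prop :=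
  forall X : M -> Prop, C X -> (exists x, X x) -> exists x, X x /\ forall y, X y -> ~ S y x.

Definition beta_model : Prop :=
  forall R, C R -> (model_wf (crel R) <-> truly_wf (crel R)).

Inductive Rdist (Q : M -> M -> Prop) (a : M) : M -> nat -> Prop :=
| Rdist0 : Rdist Q a a 0
| RdistS : forall z w n, Q z w -> Rdist Q a w n -> Rdist Q a z (S n).

Inductive below (S : M -> M -> Prop) (y : M) : M -> Prop :=
| below0 : below S y y
| belowS : forall w v, S w v -> below S y v -> below S y w.

Definition is_iso (D1 : M -> Prop) (S1 : M -> M -> Prop)
    (D2 : M -> Prop) (S2 : M -> M -> Prop) (f : M -> M) : Prop :=
  (forall x, D1 x -> D2 (f x)) /\
  (forall x y, D1 x -> D1 y -> f x = f y -> x = y) /\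
  (forall y, D2 y -> exists x, D1 x /\ f x = y) /\
  (forall x y, D1 x -> D1 y -> (S1 x y <-> S2 (f x) (f y))).

Definition isomorphic D1 S1 D2 S2 : Prop := exists f, is_iso D1 S1 D2 S2 f.

Definition coding_pair (N R : M -> Prop) : Prop :=
  C N /\ C R /\
  (forall p, R p -> exists x y, is_pair x y p /\ N x /\ N y) /\
  exists a, N a /\
    (forall z, N z -> exists! n, Rdist (crel R) a z n) /\
    (forall x y z, y <> z -> crel R y x -> crel R z x ->
       ~ isomorphic (fun w => N w /\ below (crel R) y w) (crel R)
                    (fun w => N w /\ below (crel R) z w) (crel R)) /\
    (forall y z n, y <> z -> N y -> N z ->
       Rdist (crel R) a y n -> Rdist (crel R) a z n ->
       forall v, crel R v y -> ~ crel R v z) /\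
    truly_wf (crel R).

Definition iso_in_C (N1 R1 N2 R2 : M -> Prop) : Prop :=
  exists F, C F /\ (forall p, F p -> exists x y, is_pair x y p) /\
    exists f, is_iso N1 (crel R1) N2 (crel R2) f /\
      forall x y, crel F x y <-> (N1 x /\ y = f x).

End MK.

(* Main.v *)
Require Import Defs.
From Stdlib Require Import Classical ClassicalEpsilon Lia FunctionalExtensionality PropExtensionality.

Definition Dbl (M : Type) (mem : M -> M -> Prop) (C : (M -> Prop) -> Prop)
  (P : (nat -> M) -> (nat -> M -> Prop) -> Prop) : Prop :=
  exists p, forall es ec, P es ec <-> sat M mem C es ec p.

Lemma d_mem {M mem C} i j : Dbl M mem C (fun es ec => mem (es i) (es j)).
Proof. exists (FMem i j); simpl; tauto. Qed.
Lemma d_eq {M mem C} i j : Dbl M mem C (fun es ec => es i = es j).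
Proof. exists (FEq i j); simpl; tauto. Qed.
Lemma d_in {M mem C} i j : Dbl M mem C (fun es ec => ec j (es i)).
Proof. exists (FIn i j); simpl; tauto. Qed.
Lemma d_not {M mem C P} : Dbl M mem C P -> Dbl M mem C (fun es ec => ~ P es ec).
Proof. intros [p Hp]; exists (FNot p); intros; simpl; rewrite Hp; tauto. Qed.
Lemma d_and {M mem C P Q} : Dbl M mem C P -> Dbl M mem C Q ->
  Dbl M mem C (fun es ec => P es ec /\ Q es ec).
Proof. intros [p Hp] [q Hq]; exists (FAnd p q); intros; simpl; rewrite Hp, Hq; tauto. Qed.
Lemma d_or {M mem C P Q} : Dbl M mem C P -> Dbl M mem C Q ->
  Dbl M mem C (fun es ec => P es ec \/ Q es ec).
Proof. intros [p Hp] [q Hq]; exists (FNot (FAnd (FNot p) (FNot q))); intros; simpl;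
  rewrite Hp, Hq; tauto. Qed.
Lemma d_imp {M mem C P Q} : Dbl M mem C P -> Dbl M mem C Q ->
  Dbl M mem C (fun es ec => P es ec -> Q es ec).
Proof. intros [p Hp] [q Hq]; exists (FNot (FAnd p (FNot q))); intros; simpl;
  rewrite Hp, Hq; tauto. Qed.
Lemma d_iff {M mem C P Q} : Dbl M mem C P -> Dbl M mem C Q ->
  Dbl M mem C (fun es ec => P es ec <-> Q es ec).
Proof. intros [p Hp] [q Hq];
  exists (FAnd (FNot (FAnd p (FNot q))) (FNot (FAnd q (FNot p)))); intros; simpl;
  rewrite Hp, Hq; tauto. Qed.
Lemma d_allS {M mem C P} : Dbl M mem C P ->
  Dbl M mem C (fun es ec => forall x, P (scons x es) ec).
Proof. intros [p Hp]; exists (FAllS p); intros; simpl; split; intros H x;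
  apply Hp; auto. Qed.
Lemma d_exS {M mem C P} : Dbl M mem C P ->
  Dbl M mem C (fun es ec => exists x, P (scons x es) ec).
Proof. intros [p Hp]; exists (FNot (FAllS (FNot p))); intros; simpl; split.
  - intros [x Hx] H. apply (H x), Hp, Hx.
  - intros H. apply NNPP; intros H'; apply H; intros x Hx; apply H'; exists x; apply Hp; auto.
Qed.
Lemma d_allC {M mem C P} : Dbl M mem C P ->
  Dbl M mem C (fun es ec => forall A, C A -> P es (scons A ec)).
Proof. intros [p Hp]; exists (FAllC p); intros; simpl; split; intros H A HA;
  apply Hp; auto. Qed.
Lemma d_exC {M mem C P} : Dbl M mem C P ->
  Dbl M mem C (fun es ec => exists A, C A /\ P es (scons A ec)).
Proof. intros [p Hp]; exists (FNot (FAllC (FNot p))); intros; simpl; split.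
  - intros [A [HA Hx]] H. apply (H A HA), Hp, Hx.
  - intros H. apply NNPP; intros H'; apply H; intros A HA Hx; apply H'; exists A; split; auto; apply Hp; auto.
Qed.

Lemma d_pair {M mem C} i j k :
  Dbl M mem C (fun es ec => is_pair M mem (es i) (es j) (es k)).
Proof.
  exact (d_allS (d_iff (d_mem 0 (S k)) (d_or (d_allS (d_iff (d_mem 0 1) (d_eq 0 (S (S i)))))
     (d_allS (d_iff (d_mem 0 1) (d_or (d_eq 0 (S (S i))) (d_eq 0 (S (S j))))))))).
Qed.

Lemma d_crel {M mem C} i j k :
  Dbl M mem C (fun es ec => crel M mem (ec k) (es i) (es j)).
Proof. exact (d_exS (d_and (d_pair (S i) (S j) 0) (d_in 0 k))). Qed.

Definition DomOK (M : Type) (N : M -> Prop) (S : M -> M -> Prop) (D : M -> Prop) (x : M) : Prop :=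
  (forall w, D w -> N w) /\ D x /\ (forall u v, S u v -> D v -> D u) /\
  (forall u, D u -> u <> x -> exists v, D v /\ S u v).

Definition IsoSubM (M : Type) (mem : M -> M -> Prop) (N1 R1 N2 R2 H : M -> Prop) (x z : M) : Prop :=
  (forall p, H p -> exists u v, is_pair M mem u v p) /\
  (forall u v v', crel M mem H u v -> crel M mem H u v' -> v = v') /\
  (forall u u' v, crel M mem H u v -> crel M mem H u' v -> u = u') /\
  (forall u v u' v', crel M mem H u v -> crel M mem H u' v' ->
      (crel M mem R1 u u' <-> crel M mem R2 v v')) /\
  crel M mem H x z /\
  DomOK M N1 (crel M mem R1) (fun u => exists v, crel M mem H u v) x /\
  DomOK M N2 (crel M mem R2) (fun v => exists u, crel M mem H u v) z.

Lemma d_IsoSub {M mem C} n1 r1 n2 r2 h x z :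
  Dbl M mem C (fun es ec => IsoSubM M mem (ec n1) (ec r1) (ec n2) (ec r2) (ec h) (es x) (es z)).
Proof.
  exact (d_and (d_allS (d_imp (d_in 0 h) (d_exS (d_exS (d_pair 1 0 2)))))
  (d_and (d_allS (d_allS (d_allS (d_imp (d_crel 2 1 h) (d_imp (d_crel 2 0 h) (d_eq 1 0))))))
  (d_and (d_allS (d_allS (d_allS (d_imp (d_crel 2 0 h) (d_imp (d_crel 1 0 h) (d_eq 2 1))))))
  (d_and (d_allS (d_allS (d_allS (d_allS (d_imp (d_crel 3 2 h) (d_imp (d_crel 1 0 h)
       (d_iff (d_crel 3 1 r1) (d_crel 2 0 r2))))))))
  (d_and (d_crel x z h)
  (d_and
    (d_and (d_allS (d_imp (d_exS (d_crel 1 0 h)) (d_in 0 n1)))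
    (d_and (d_exS (d_crel (S x) 0 h))
    (d_and (d_allS (d_allS (d_imp (d_crel 1 0 r1) (d_imp (d_exS (d_crel 1 0 h)) (d_exS (d_crel 2 0 h))))))
      (d_allS (d_imp (d_exS (d_crel 1 0 h)) (d_imp (d_not (d_eq 0 (S x)))
         (d_exS (d_and (d_exS (d_crel 1 0 h)) (d_crel 1 0 r1)))))))))
    (d_and (d_allS (d_imp (d_exS (d_crel 0 1 h)) (d_in 0 n2)))
    (d_and (d_exS (d_crel 0 (S z) h))
    (d_and (d_allS (d_allS (d_imp (d_crel 1 0 r2) (d_imp (d_exS (d_crel 0 1 h)) (d_exS (d_crel 0 2 h))))))
      (d_allS (d_imp (d_exS (d_crel 0 1 h)) (d_imp (d_not (d_eq 0 (S z)))
         (d_exS (d_and (d_exS (d_crel 0 1 h)) (d_crel 1 0 r2))))))))))))))).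
Qed.

Definition Gpred (M : Type) (mem : M -> M -> Prop) (C : (M -> Prop) -> Prop)
  (N1 R1 N2 R2 : M -> Prop) (y z p : M) : Prop :=
  is_pair M mem y z p \/
  exists c w, crel M mem R1 c y /\ crel M mem R2 w z /\
    exists H, C H /\ IsoSubM M mem N1 R1 N2 R2 H c w /\ H p.

Lemma d_G {M mem C} :
  Dbl M mem C (fun es ec => Gpred M mem C (ec 0) (ec 1) (ec 2) (ec 3) (es 1) (es 2) (es 0)).
Proof.
  exact (d_or (d_pair 1 2 0) (d_exS (d_exS (d_and (d_crel 1 3 1) (d_and (d_crel 0 4 3)
    (d_exC (d_and (d_IsoSub 1 2 3 4 0 1 0) (d_in 2 0)))))))).
Qed.

Definition sub (M : Type) (N : M -> Prop) (Q : M -> M -> Prop) (y : M) : M -> Prop :=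
  fun w => N w /\ below M Q y w.

Definition CP (M : Type) (N : M -> Prop) (Q : M -> M -> Prop) (a : M) : Prop :=
  N a /\
  (forall z, N z -> exists! n, Rdist M Q a z n) /\
  (forall x y z, y <> z -> Q y x -> Q z x ->
     ~ isomorphic M (fun w => N w /\ below M Q y w) Q (fun w => N w /\ below M Q z w) Q) /\
  (forall y z n, y <> z -> N y -> N z -> Rdist M Q a y n -> Rdist M Q a z n ->
     forall v, Q v y -> ~ Q v z) /\
  (forall u v, Q u v -> N u /\ N v).


Lemma dist_unique M N Q a : CP M N Q a -> forall z n m, N z -> Rdist M Q a z n -> Rdist M Q a z m -> n = m.
Proof.
  intros (Ha & Hd & _) z n m Hz H1 H2. destruct (Hd z Hz) as [k [_ Hk]].
  rewrite <- (Hk n H1), <- (Hk m H2); auto.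
Qed.

Lemma has_dist M N Q a : CP M N Q a -> forall z, N z -> exists n, Rdist M Q a z n.
Proof. intros (Ha & Hd & _) z Hz. destruct (Hd z Hz) as [k [Hk _]]; eauto. Qed.

Lemma endp M N Q a : CP M N Q a -> forall u v, Q u v -> N u /\ N v.
Proof. intros (_ & _ & _ & _ & H); auto. Qed.

Lemma below_dist M Q a x w n : below M Q x w -> Rdist M Q a x n ->
  exists k, Rdist M Q a w (k + n) /\ (k = 0 -> w = x).
Proof.
  intros Hb Hx; induction Hb.
  - exists 0; split; auto.
  - destruct IHHb as [k [Hk _]]. exists (Datatypes.S k); split; [|lia].
    simpl; econstructor; eauto.
Qed.

Lemma below_trans M Q x y w : below M Q x y -> below M Q y w -> below M Q x w.
Proof. intros H1 H2; induction H2; auto. econstructor; eauto. Qed.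

Lemma below_of_dist M Q a z n : Rdist M Q a z n -> below M Q a z.
Proof. intros H; induction H; [constructor | econstructor; eauto]. Qed.

Lemma no_back M N Q a : CP M N Q a -> forall u v, N u -> Q u v -> below M Q u v -> False.
Proof.
  intros HC u v Hu Huv Hb. destruct (has_dist _ _ _ _ HC u Hu) as [n Hn].
  destruct (below_dist _ _ _ _ _ _ Hb Hn) as [k [Hk _]].
  assert (Rdist M Q a u (Datatypes.S (k + n))) by (econstructor; eauto).
  pose proof (dist_unique _ _ _ _ HC _ _ _ Hu Hn H). lia.
Qed.

Lemma irrefl M N Q a : CP M N Q a -> forall u, Q u u -> False.
Proof.
  intros HC u H. eapply (no_back _ _ _ _ HC u u); eauto.
  - apply (endp _ _ _ _ HC _ _ H).
  - constructor.
Qed.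

Lemma parent_unique M N Q a : CP M N Q a -> forall u v v', Q u v -> Q u v' -> v = v'.
Proof.
  intros HC u v v' H1 H2. apply NNPP; intros Hne.
  destruct (endp _ _ _ _ HC _ _ H1) as [Hu Hv].
  destruct (endp _ _ _ _ HC _ _ H2) as [_ Hv'].
  destruct (has_dist _ _ _ _ HC v Hv) as [m Hm].
  destruct (has_dist _ _ _ _ HC v' Hv') as [m' Hm'].
  assert (Rdist M Q a u (Datatypes.S m)) by (eapply RdistS; [exact H1|exact Hm]).
  assert (Rdist M Q a u (Datatypes.S m')) by (eapply RdistS; [exact H2|exact Hm']).
  pose proof (dist_unique _ _ _ _ HC _ _ _ Hu H H0). injection H3 as Hmm; subst m'.
  destruct HC as (_ & _ & _ & Hp & _). eapply (Hp v v' m); eauto.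
Qed.

Lemma same_level M N Q a : CP M N Q a -> forall c u, below M Q c u ->
  forall c' n, below M Q c' u -> Rdist M Q a c n -> Rdist M Q a c' n -> N c -> N c' -> c = c'.
Proof.
  intros HC c u Hb. induction Hb; intros c' n Hb' Hn Hn' Hc Hc'.
  - destruct (below_dist _ _ _ _ _ _ Hb' Hn') as [k [Hk Hk0]].
    pose proof (dist_unique _ _ _ _ HC _ _ _ Hc Hn Hk).
    apply Hk0; lia.
  - inversion Hb'; subst.
    + assert (below M Q c w) by (econstructor; eauto).
      destruct (below_dist _ _ _ _ _ _ H0 Hn) as [k [Hk Hk0]].
      pose proof (dist_unique _ _ _ _ HC _ _ _ Hc' Hn' Hk).
      symmetry; apply Hk0; lia.
    + pose proof (parent_unique _ _ _ _ HC _ _ _ H H0); subst. eauto.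
Qed.

Lemma disjoint M N Q a : CP M N Q a -> forall y c c' u, Q c y -> Q c' y ->
  below M Q c u -> below M Q c' u -> c = c'.
Proof.
  intros HC y c c' u H1 H2 B1 B2.
  destruct (endp _ _ _ _ HC _ _ H1) as [Hc Hy].
  destruct (endp _ _ _ _ HC _ _ H2) as [Hc' _].
  destruct (has_dist _ _ _ _ HC y Hy) as [m Hm].
  eapply (same_level _ _ _ _ HC c u B1 c' (Datatypes.S m)); eauto; econstructor; eauto.
Qed.

Lemma domok_char M N Q a : CP M N Q a -> forall D x, N x ->
  (forall w, D w -> N w) -> D x -> (forall u v, Q u v -> D v -> D u) ->
  (forall u, D u -> u <> x -> exists v, D v /\ Q u v) ->
  forall w, D w <-> N w /\ below M Q x w.
Proof.
  intros HC D x Hx H1 H2 H3 H4 w; split.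
  - intros Hw. split; auto. destruct (has_dist _ _ _ _ HC w (H1 _ Hw)) as [n Hn].
    revert Hw. induction Hn; intros Hw.
    + destruct (classic (a = x)) as [<-|Hne]; [constructor|].
      destruct (H4 _ Hw Hne) as [v [Hv Hav]]. exfalso.
      destruct (has_dist _ _ _ _ HC v (H1 _ Hv)) as [m Hm].
      assert (Rdist M Q a a (Datatypes.S m)) by (eapply RdistS; [exact Hav|exact Hm]).
      pose proof (dist_unique _ _ _ _ HC _ _ _ (H1 _ Hw) H (Rdist0 _ _ _)). lia.
    + destruct (classic (z = x)) as [->|Hne]; [constructor|].
      destruct (H4 _ Hw Hne) as [v [Hv Hzv]].
      pose proof (parent_unique _ _ _ _ HC _ _ _ H Hzv); subst.
      econstructor; eauto.
  - intros [Hn Hb]. induction Hb; auto. eapply H3; eauto.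
    apply IHHb. destruct (endp _ _ _ _ HC _ _ H); auto.
Qed.

Lemma iso_sym M D1 Q1 D2 Q2 f : is_iso M D1 Q1 D2 Q2 f -> exists g, is_iso M D2 Q2 D1 Q1 g.
Proof.
  intros (Hm & Hi & Hs & Hp).
  assert (Hex : forall v, exists w, D2 v -> D1 w /\ f w = v).
  { intros v. destruct (classic (D2 v)) as [Hv|Hv].
    - destruct (Hs v Hv) as [w Hw]; eauto.
    - exists v; tauto. }
  exists (fun v => proj1_sig (constructive_indefinite_description _ (Hex v))).
  refine (conj _ (conj _ (conj _ _))).
  - intros x Hx. destruct (constructive_indefinite_description _ (Hex x)) as [w Hw]; simpl; tauto.
  - intros x y Hx Hy.
    destruct (constructive_indefinite_description _ (Hex x)) as [w Hw];
    destruct (constructive_indefinite_description _ (Hex y)) as [w' Hw']; simpl.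
    intros ->. destruct (Hw Hx) as [_ <-]. destruct (Hw' Hy) as [_ <-]. auto.
  - intros y Hy. exists (f y); split; auto.
    destruct (constructive_indefinite_description _ (Hex (f y))) as [w Hw]; simpl.
    destruct (Hw (Hm _ Hy)) as [Hw1 Hw2]. apply Hi; auto.
  - intros x y Hx Hy.
    destruct (constructive_indefinite_description _ (Hex x)) as [w Hw];
    destruct (constructive_indefinite_description _ (Hex y)) as [w' Hw']; simpl.
    destruct (Hw Hx) as [H1 <-]. destruct (Hw' Hy) as [H2 <-]. rewrite (Hp w w' H1 H2). tauto.
Qed.

Lemma iso_trans M D1 Q1 D2 Q2 D3 Q3 f g : is_iso M D1 Q1 D2 Q2 f -> is_iso M D2 Q2 D3 Q3 g ->
  is_iso M D1 Q1 D3 Q3 (fun x => g (f x)).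
Proof.
  intros (Hm & Hi & Hs & Hp) (Gm & Gi & Gs & Gp). refine (conj _ (conj _ (conj _ _))).
  - auto.
  - intros x y Hx Hy E. apply Hi; auto.
  - intros z Hz. destruct (Gs z Hz) as [y [Hy <-]]. destruct (Hs y Hy) as [x [Hx <-]]. eauto.
  - intros x y Hx Hy. rewrite (Hp x y Hx Hy), (Gp (f x) (f y) (Hm _ Hx) (Hm _ Hy)); tauto.
Qed.

Lemma iso_ext M D1 Q1 D2 Q2 D1' D2' f : (forall x, D1 x <-> D1' x) -> (forall x, D2 x <-> D2' x) ->
  is_iso M D1 Q1 D2 Q2 f -> is_iso M D1' Q1 D2' Q2 f.
Proof.
  intros E1 E2 (Hm & Hi & Hs & Hp). refine (conj _ (conj _ (conj _ _))).
  - intros x Hx; apply E2, Hm, E1, Hx.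
  - intros x y Hx Hy; apply Hi; apply E1; auto.
  - intros y Hy. destruct (Hs y (proj2 (E2 y) Hy)) as [x [Hx Hf]]. exists x; split; auto; apply E1; auto.
  - intros x y Hx Hy. apply Hp; apply E1; auto.
Qed.

Lemma iso_root M N1 Q1 a1 N2 Q2 a2 y z h : CP M N1 Q1 a1 -> CP M N2 Q2 a2 -> N1 y -> N2 z ->
  is_iso M (sub M N1 Q1 y) Q1 (sub M N2 Q2 z) Q2 h -> h y = z.
Proof.
  intros C1 C2 Hy Hz (Hm & Hi & Hs & Hp).
  destruct (Hs z (conj Hz (below0 _ _ _))) as [x [[Hx Hbx] Hhx]].
  inversion Hbx; subst; auto.
  exfalso. destruct (endp _ _ _ _ C1 _ _ H) as [_ Hv].
  assert (Dv : sub M N1 Q1 y v) by (split; auto).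
  assert (Dx : sub M N1 Q1 y x) by (split; auto).
  pose proof (proj1 (Hp x v Dx Dv) H).
  destruct (Hm v Dv) as [_ Hb2].
  eapply (no_back _ _ _ _ C2 (h x)); eauto.
Qed.

Lemma iso_restrict M N1 Q1 a1 N2 Q2 a2 y z h u : CP M N1 Q1 a1 -> CP M N2 Q2 a2 ->
  is_iso M (sub M N1 Q1 y) Q1 (sub M N2 Q2 z) Q2 h -> N1 u -> below M Q1 y u ->
  is_iso M (sub M N1 Q1 u) Q1 (sub M N2 Q2 (h u)) Q2 h.
Proof.
  intros C1 C2 (Hm & Hi & Hs & Hp) Hu Hyu.
  assert (Inc : forall w, sub M N1 Q1 u w -> sub M N1 Q1 y w).
  { intros w [Hw Hb]; split; auto; eapply below_trans; eauto. }
  refine (conj _ (conj _ (conj _ _))).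
  - intros x Hx. split. { destruct (Hm x (Inc _ Hx)); auto. }
    destruct Hx as [Hw Hb]. induction Hb; [constructor|].
    destruct (endp _ _ _ _ C1 _ _ H) as [_ Hv].
    specialize (IHHb Hv).
    assert (Bw : below M Q1 u w) by (econstructor; eauto).
    econstructor; [|exact IHHb]. apply (Hp w v (Inc _ (conj Hw Bw)) (Inc _ (conj Hv Hb))); auto.
  - intros x y' Hx Hy'. apply Hi; apply Inc; auto.
  - intros v [Hv Hb]. induction Hb.
    + exists u; split; auto. split; auto. constructor.
    + destruct (endp _ _ _ _ C2 _ _ H) as [Hw Hv0].
      destruct (IHHb Hv0) as [w1 [Hw1 Hw1e]].
      assert (D2w : sub M N2 Q2 z w).
      { split; auto. eapply below_trans; [apply (Hm _ (conj Hu Hyu))|econstructor; eauto]. }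
      destruct (Hs w D2w) as [x [Dx Hx]].
      exists x; split; auto. split; [apply Dx|].
      subst. apply (Hp x w1 Dx (Inc _ Hw1)) in H. destruct Hw1. econstructor; eauto.
  - intros x y' Hx Hy'. apply Hp; apply Inc; auto.
Qed.

Lemma iso_rigid M N1 Q1 a1 N2 Q2 a2 c w g1 g2 : CP M N1 Q1 a1 -> CP M N2 Q2 a2 -> N1 c -> N2 w ->
  is_iso M (sub M N1 Q1 c) Q1 (sub M N2 Q2 w) Q2 g1 ->
  is_iso M (sub M N1 Q1 c) Q1 (sub M N2 Q2 w) Q2 g2 ->
  forall u, N1 u -> below M Q1 c u -> g1 u = g2 u.
Proof.
  intros C1 C2 Hc Hw I1 I2 u Hu Hb. induction Hb.
  - rewrite (iso_root _ _ _ _ _ _ _ _ _ _ C1 C2 Hc Hw I1), (iso_root _ _ _ _ _ _ _ _ _ _ C1 C2 Hc Hw I2); auto.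
  - destruct (endp _ _ _ _ C1 _ _ H) as [_ Hv]. specialize (IHHb Hv).
    assert (Dw : sub M N1 Q1 c w0) by (split; auto; econstructor; eauto).
    assert (Dv : sub M N1 Q1 c v) by (split; auto).
    pose proof (proj1 (proj2 (proj2 (proj2 I1)) _ _ Dw Dv) H) as E1.
    pose proof (proj1 (proj2 (proj2 (proj2 I2)) _ _ Dw Dv) H) as E2.
    rewrite IHHb in E1.
    apply NNPP; intros Hne.
    pose proof (proj1 (proj2 (proj2 C2))) as Hsib.
    apply (Hsib (g2 v) (g1 w0) (g2 w0) Hne E1 E2).
    pose proof (iso_restrict _ _ _ _ _ _ _ _ _ _ w0 C1 C2 I1 Hu (proj2 Dw)) as R1.
    pose proof (iso_restrict _ _ _ _ _ _ _ _ _ _ w0 C1 C2 I2 Hu (proj2 Dw)) as R2.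
    destruct (iso_sym _ _ _ _ _ _ R1) as [k Hk].
    exists (fun x => g2 (k x)). exact (iso_trans _ _ _ _ _ _ _ _ _ Hk R2).
Qed.

Definition PairOK (M : Type) (mem : M -> M -> Prop) : Prop :=
  forall u v, exists d, forall t, mem t d <-> t = u \/ t = v.
Definition ExtOK (M : Type) (mem : M -> M -> Prop) : Prop :=
  forall x y, (forall z, mem z x <-> mem z y) -> x = y.

Lemma zfc_pair M mem C : zfc_model M mem C -> PairOK M mem /\ ExtOK M mem.
Proof.
  intros (_ & Hext & Hpair & _ & _ & _ & Hsep & _). split; [|exact Hext].
  intros u v. destruct (Hpair u v) as [c [Hu Hv]].
  destruct (Hsep (FNot (FAnd (FNot (FEq 0 1)) (FNot (FEq 0 2)))) (scons u (scons v (fun _ => u)))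
     (fun _ _ => True) eq_refl c) as [b Hb].
  exists b. intros t. rewrite Hb. simpl. split.
  - intros [_ H]. tauto.
  - intros [->| ->]; tauto.
Qed.

Lemma pair_inj M mem : PairOK M mem -> forall x y x' y' p,
  is_pair M mem x y p -> is_pair M mem x' y' p -> x = x' /\ y = y'.
Proof.
  intros HP x y x' y' p H1 H2.
  destruct (HP x x) as [s Hs].
  assert (Hsp : mem s p) by (apply H1; left; intros t; rewrite Hs; tauto).
  assert (Exx : x = x').
  { apply H2 in Hsp. destruct Hsp as [K|K].
    - specialize (K x'). rewrite Hs in K. destruct (proj2 K eq_refl); auto.
    - specialize (K x'). rewrite Hs in K. destruct (proj2 K (or_introl eq_refl)); auto. }
  subst x'. split; auto.
  destruct (HP x y) as [t Ht]. destruct (HP x y') as [t' Ht'].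
  assert (Htp : mem t p) by (apply H1; right; intros q; rewrite Ht; tauto).
  assert (Htp' : mem t' p) by (apply H2; right; intros q; rewrite Ht'; tauto).
  apply H2 in Htp. apply H1 in Htp'.
  destruct Htp as [K|K]; destruct Htp' as [K'|K'].
  - specialize (K y); specialize (K' y'); rewrite Ht in K; rewrite Ht' in K'.
    assert (y = x) by tauto. assert (y' = x) by tauto. congruence.
  - specialize (K y); specialize (K' y'); rewrite Ht in K; rewrite Ht' in K'.
    assert (y = x) by tauto. assert (y' = x \/ y' = y) by tauto. destruct H0; congruence.
  - specialize (K y); specialize (K' y'); rewrite Ht in K; rewrite Ht' in K'.
    assert (y = x \/ y = y') by tauto. assert (y' = x) by tauto. destruct H; congruence.
  - specialize (K y); rewrite Ht in K.
    assert (y = x \/ y = y') by tauto. destruct H; auto. subst y.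
    specialize (K' y'); rewrite Ht' in K'. assert (y' = x \/ y' = x) by tauto. destruct H; auto.
Qed.

Lemma pair_ex M mem : PairOK M mem -> ExtOK M mem -> forall x y, exists p, is_pair M mem x y p.
Proof.
  intros HP HE x y. destruct (HP x x) as [s Hs]. destruct (HP x y) as [e He].
  destruct (HP s e) as [p Hp]. exists p. intros w. rewrite Hp. split.
  - intros [->| ->]; [left|right]; intros t; [rewrite Hs|rewrite He]; tauto.
  - intros [K|K]; [left|right]; apply HE; intros t; rewrite K; [rewrite Hs|rewrite He]; tauto.
Qed.

Lemma CP_of M mem C N R : PairOK M mem -> coding_pair M mem C N R ->
  exists a, CP M N (crel M mem R) a.
Proof.
  intros HP (_ & _ & Hpr & a & Ha & Hd & Hsib & Hpar & _).
  exists a. refine (conj Ha (conj Hd (conj Hsib (conj Hpar _)))).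
  intros u v [p [Hp HR]]. destruct (Hpr p HR) as [x [y [Hxy [Hx Hy]]]].
  destruct (pair_inj _ _ HP _ _ _ _ _ Hp Hxy); subst; auto.
Qed.

Lemma isosub_fun M mem N1 R1 a1 N2 R2 a2 H x z :
  CP M N1 (crel M mem R1) a1 -> CP M N2 (crel M mem R2) a2 ->
  IsoSubM M mem N1 R1 N2 R2 H x z ->
  exists g, is_iso M (sub M N1 (crel M mem R1) x) (crel M mem R1) (sub M N2 (crel M mem R2) z) (crel M mem R2) g /\
    forall u v, crel M mem H u v <-> sub M N1 (crel M mem R1) x u /\ v = g u.
Proof.
  intros C1 C2 (Hpr & Hfun & Hinj & Hpres & Hxz & (A1 & A2 & A3 & A4) & (B1 & B2 & B3 & B4)).
  pose proof (domok_char _ _ _ _ C1 _ x (A1 _ A2) A1 A2 A3 A4) as Dc.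
  pose proof (domok_char _ _ _ _ C2 _ z (B1 _ B2) B1 B2 B3 B4) as Rc.
  assert (Hex : forall u, exists v, (exists v', crel M mem H u v') -> crel M mem H u v).
  { intros u. destruct (classic (exists v', crel M mem H u v')) as [[v' Hv']|Hn]; eauto.
    exists u; tauto. }
  set (g := fun u => proj1_sig (constructive_indefinite_description _ (Hex u))).
  assert (Hg : forall u, sub M N1 (crel M mem R1) x u -> crel M mem H u (g u)).
  { intros u Hu. unfold g. destruct (constructive_indefinite_description _ (Hex u)) as [v Hv]; simpl.
    apply Hv. apply Dc. exact Hu. }
  exists g. split.
  - refine (conj _ (conj _ (conj _ _))).
    + intros u Hu. apply Rc. exists u. apply Hg; auto.
    + intros u u' Hu Hu' E. apply (Hinj u u' (g u)); auto. rewrite E; apply Hg; auto.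
    + intros v Hv. apply Rc in Hv. destruct Hv as [u Hu].
      assert (Du : sub M N1 (crel M mem R1) x u) by (apply Dc; eauto).
      exists u; split; auto. apply (Hfun u); auto.
    + intros u u' Hu Hu'. apply Hpres; apply Hg; auto.
  - intros u v; split.
    + intros Huv. assert (Du : sub M N1 (crel M mem R1) x u) by (apply Dc; eauto).
      split; auto. apply (Hfun u); auto.
    + intros [Du ->]. apply Hg; auto.
Qed.

Lemma hmem M mem N1 R1 a1 N2 R2 a2 H c w u v :
  CP M N1 (crel M mem R1) a1 -> CP M N2 (crel M mem R2) a2 ->
  IsoSubM M mem N1 R1 N2 R2 H c w -> crel M mem H u v ->
  sub M N1 (crel M mem R1) c u /\ sub M N2 (crel M mem R2) w v.
Proof.
  intros C1 C2 HI Huv. destruct (isosub_fun _ _ _ _ _ _ _ _ _ _ _ C1 C2 HI) as [g [Hg Hc]].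
  apply Hc in Huv. destruct Huv as [Hu ->]. split; auto. apply Hg; auto.
Qed.

Lemma uniq_U M mem N1 R1 a1 N2 R2 a2 H H' c c' w w' y z :
  CP M N1 (crel M mem R1) a1 -> CP M N2 (crel M mem R2) a2 ->
  IsoSubM M mem N1 R1 N2 R2 H c w -> IsoSubM M mem N1 R1 N2 R2 H' c' w' ->
  crel M mem R1 c y -> crel M mem R1 c' y -> crel M mem R2 w z -> crel M mem R2 w' z ->
  c = c' \/ w = w' ->
  c = c' /\ w = w' /\ forall u v, crel M mem H u v <-> crel M mem H' u v.
Proof.
  intros C1 C2 I I' Sc Sc' Sw Sw' E.
  destruct (isosub_fun _ _ _ _ _ _ _ _ _ _ _ C1 C2 I) as [g [Hg Hgc]].
  destruct (isosub_fun _ _ _ _ _ _ _ _ _ _ _ C1 C2 I') as [g' [Hg' Hgc']].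
  assert (E2 : c = c' /\ w = w').
  { destruct E as [<-|<-].
    - split; auto. apply NNPP; intros Hne.
      apply ((proj1 (proj2 (proj2 C2))) z w w' Hne Sw Sw').
      destruct (iso_sym _ _ _ _ _ _ Hg) as [k Hk].
      exists (fun x => g' (k x)). exact (iso_trans _ _ _ _ _ _ _ _ _ Hk Hg').
    - split; auto. apply NNPP; intros Hne.
      apply ((proj1 (proj2 (proj2 C1))) y c c' Hne Sc Sc').
      destruct (iso_sym _ _ _ _ _ _ Hg') as [k Hk].
      exists (fun x => k (g x)). exact (iso_trans _ _ _ _ _ _ _ _ _ Hg Hk). }
  destruct E2 as [<- <-]. split; auto; split; auto.
  destruct (endp _ _ _ _ C1 _ _ Sc) as [Nc _].
  destruct (endp _ _ _ _ C2 _ _ Sw) as [Nw _].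
  pose proof (iso_rigid _ _ _ _ _ _ _ _ _ _ _ C1 C2 Nc Nw Hg Hg') as R.
  intros u v. rewrite Hgc, Hgc'. split; intros [Hu ->]; split; auto; [|symmetry];
  apply R; apply Hu.
Qed.

Lemma G_in_C M mem C (Hcomp : forall p es ec, (forall i, C (ec i)) -> C (fun x => sat M mem C (scons x es) ec p))
  N1 R1 N2 R2 y z : C N1 -> C R1 -> C N2 -> C R2 ->
  C (fun p => Gpred M mem C N1 R1 N2 R2 y z p).
Proof.
  intros H1 H2 H3 H4. destruct (@d_G M mem C) as [phi Hphi].
  set (es := scons y (scons z (fun _ : nat => y))).
  set (ec := scons N1 (scons R1 (scons N2 (scons R2 (fun _ : nat => N1))))).
  assert (Hc : forall i, C (ec i)) by (intros [|[|[|[|i]]]]; simpl; auto).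
  pose proof (Hcomp phi es ec Hc) as HC.
  replace (fun p => Gpred M mem C N1 R1 N2 R2 y z p) with (fun x => sat M mem C (scons x es) ec phi); auto.
  apply functional_extensionality; intros x. apply propositional_extensionality.
  rewrite <- Hphi. reflexivity.
Qed.

Lemma G_crel M mem C N1 R1 N2 R2 y z u v : PairOK M mem -> ExtOK M mem ->
  crel M mem (fun p => Gpred M mem C N1 R1 N2 R2 y z p) u v <->
  (u = y /\ v = z) \/ exists c w H, crel M mem R1 c y /\ crel M mem R2 w z /\ C H /\
     IsoSubM M mem N1 R1 N2 R2 H c w /\ crel M mem H u v.
Proof.
  intros HP HE. split.
  - intros [p [Hp [Gp|(c & w & Sc & Sw & H & CH & IH & Hh)]]].
    + left. eapply pair_inj; eauto.
    + right. exists c, w, H. refine (conj Sc (conj Sw (conj CH (conj IH _)))). exists p; auto.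
  - intros [[-> ->]|(c & w & H & Sc & Sw & CH & IH & [p [Hp Hh]])].
    + destruct (pair_ex _ _ HP HE y z) as [p Hp]. exists p; split; auto. left; auto.
    + exists p; split; auto. right. exists c, w. refine (conj Sc (conj Sw _)). exists H; auto.
Qed.

Definition Qp M mem C N1 R1 N2 R2 t : Prop :=
  N1 t -> forall z h, N2 z ->
  is_iso M (sub M N1 (crel M mem R1) t) (crel M mem R1) (sub M N2 (crel M mem R2) z) (crel M mem R2) h ->
  exists H, C H /\ IsoSubM M mem N1 R1 N2 R2 H t z.

Lemma step M mem C (Hcomp : forall p es ec, (forall i, C (ec i)) -> C (fun x => sat M mem C (scons x es) ec p))
  N1 R1 a1 N2 R2 a2 : PairOK M mem -> ExtOK M mem -> C N1 -> C R1 -> C N2 -> C R2 ->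
  CP M N1 (crel M mem R1) a1 -> CP M N2 (crel M mem R2) a2 ->
  forall y, (forall c, crel M mem R1 c y -> Qp M mem C N1 R1 N2 R2 c) -> Qp M mem C N1 R1 N2 R2 y.
Proof.
  intros HP HE CN1 CR1 CN2 CR2 C1 C2 y IH Hy z h Hz Hh.
  assert (hyz : h y = z) by exact (iso_root _ _ _ _ _ _ _ _ _ _ C1 C2 Hy Hz Hh).
  assert (Dy : sub M N1 (crel M mem R1) y y) by (split; auto; constructor).
  assert (IHc : forall c, crel M mem R1 c y -> exists H, C H /\ IsoSubM M mem N1 R1 N2 R2 H c (h c)
                  /\ crel M mem R2 (h c) z).
  { intros c Sc. destruct (endp _ _ _ _ C1 _ _ Sc) as [Nc _].
    assert (Dc : sub M N1 (crel M mem R1) y c) by (split; auto; econstructor; [exact Sc| constructor]).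
    pose proof (proj1 (proj2 (proj2 (proj2 Hh)) c y Dc Dy) Sc) as Shc. rewrite hyz in Shc.
    destruct (proj1 Hh c Dc) as [Nhc _].
    destruct (IH c Sc Nc (h c) h Nhc (iso_restrict _ _ _ _ _ _ _ _ _ _ c C1 C2 Hh Nc (proj2 Dc))) as [H [CH HI]].
    exists H; auto. }
  set (G := fun p => Gpred M mem C N1 R1 N2 R2 y z p).
  exists G. split. { apply G_in_C; auto. }
  assert (K : forall u v, crel M mem G u v <->
    (u = y /\ v = z) \/ exists c w H, crel M mem R1 c y /\ crel M mem R2 w z /\ C H /\
     IsoSubM M mem N1 R1 N2 R2 H c w /\ crel M mem H u v).
  { intros u v. exact (G_crel M mem C N1 R1 N2 R2 y z u v HP HE). }
  refine (conj _ (conj _ (conj _ (conj _ (conj _ (conj _ _)))))).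
  - intros p Gp. destruct Gp as [Hp|(c&w&Sc&Sw&H&CH&HI&Hh')]; eauto. exact (proj1 HI p Hh').
  - intros u v v' A B. apply K in A; apply K in B.
    destruct A as [[Eu Ev]|(c&w&H&Sc&Sw&CH&HI&Huv)];
    destruct B as [[Eu' Ev']|(c'&w'&H'&Sc'&Sw'&CH'&HI'&Huv')].
    + congruence.
    + exfalso. subst u. destruct (hmem _ _ _ _ _ _ _ _ _ _ _ _ _ C1 C2 HI' Huv') as [[_ Bc] _].
      destruct (endp _ _ _ _ C1 _ _ Sc') as [Nc' _].
      exact (no_back _ _ _ _ C1 c' y Nc' Sc' Bc).
    + exfalso. subst u. destruct (hmem _ _ _ _ _ _ _ _ _ _ _ _ _ C1 C2 HI Huv) as [[_ Bc] _].
      destruct (endp _ _ _ _ C1 _ _ Sc) as [Nc _].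
      exact (no_back _ _ _ _ C1 c y Nc Sc Bc).
    + destruct (hmem _ _ _ _ _ _ _ _ _ _ _ _ _ C1 C2 HI Huv) as [[_ Bc] _].
      destruct (hmem _ _ _ _ _ _ _ _ _ _ _ _ _ C1 C2 HI' Huv') as [[_ Bc'] _].
      pose proof (disjoint _ _ _ _ C1 y c c' u Sc Sc' Bc Bc') as Ecc.
      destruct (uniq_U _ _ _ _ _ _ _ _ _ _ _ _ _ _ _ _ C1 C2 HI HI' Sc Sc' Sw Sw' (or_introl Ecc)) as [_ [_ E]].
      apply (proj1 (proj2 HI) u v v'); auto. apply E; auto.
  - intros u u' v A B. apply K in A; apply K in B.
    destruct A as [[Eu Ev]|(c&w&H&Sc&Sw&CH&HI&Huv)];
    destruct B as [[Eu' Ev']|(c'&w'&H'&Sc'&Sw'&CH'&HI'&Huv')].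
    + congruence.
    + exfalso. subst v. destruct (hmem _ _ _ _ _ _ _ _ _ _ _ _ _ C1 C2 HI' Huv') as [_ [_ Bw]].
      destruct (endp _ _ _ _ C2 _ _ Sw') as [Nw' _].
      exact (no_back _ _ _ _ C2 w' z Nw' Sw' Bw).
    + exfalso. subst v. destruct (hmem _ _ _ _ _ _ _ _ _ _ _ _ _ C1 C2 HI Huv) as [_ [_ Bw]].
      destruct (endp _ _ _ _ C2 _ _ Sw) as [Nw _].
      exact (no_back _ _ _ _ C2 w z Nw Sw Bw).
    + destruct (hmem _ _ _ _ _ _ _ _ _ _ _ _ _ C1 C2 HI Huv) as [_ [_ Bw]].
      destruct (hmem _ _ _ _ _ _ _ _ _ _ _ _ _ C1 C2 HI' Huv') as [_ [_ Bw']].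
      pose proof (disjoint _ _ _ _ C2 z w w' v Sw Sw' Bw Bw') as Eww.
      destruct (uniq_U _ _ _ _ _ _ _ _ _ _ _ _ _ _ _ _ C1 C2 HI HI' Sc Sc' Sw Sw' (or_intror Eww)) as [_ [_ E]].
      apply (proj1 (proj2 (proj2 HI)) u u' v); auto. apply E; auto.
  - intros u v u' v' A B. apply K in A; apply K in B.
    destruct A as [[Eu Ev]|(c&w&H&Sc&Sw&CH&HI&Huv)];
    destruct B as [[Eu' Ev']|(c'&w'&H'&Sc'&Sw'&CH'&HI'&Huv')].
    + subst u v u' v'. split; intro X; exfalso; [eapply (irrefl _ _ _ _ C1)|eapply (irrefl _ _ _ _ C2)]; eauto.
    + subst u v. destruct (hmem _ _ _ _ _ _ _ _ _ _ _ _ _ C1 C2 HI' Huv') as [[_ Bc] [_ Bw]].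
      destruct (endp _ _ _ _ C1 _ _ Sc') as [Nc' _].
      destruct (endp _ _ _ _ C2 _ _ Sw') as [Nw' _].
      split; intro X; exfalso.
      * exact (no_back _ _ _ _ C1 c' y Nc' Sc' (belowS _ _ _ _ _ X Bc)).
      * exact (no_back _ _ _ _ C2 w' z Nw' Sw' (belowS _ _ _ _ _ X Bw)).
    + subst u' v'. destruct (hmem _ _ _ _ _ _ _ _ _ _ _ _ _ C1 C2 HI Huv) as [[_ Bc] [_ Bw]].
      pose proof (proj1 (proj2 (proj2 (proj2 (proj2 HI))))) as Hcw.
      split; intro X.
      * pose proof (disjoint _ _ _ _ C1 y c u u Sc X Bc (below0 _ _ _)). subst u.
        rewrite <- (proj1 (proj2 HI) c w v Hcw Huv). exact Sw.
      * pose proof (disjoint _ _ _ _ C2 z w v v Sw X Bw (below0 _ _ _)). subst v.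
        rewrite (proj1 (proj2 (proj2 HI)) u c w Huv Hcw). exact Sc.
    + destruct (classic (c = c')) as [Ecc|Ncc].
      * destruct (uniq_U _ _ _ _ _ _ _ _ _ _ _ _ _ _ _ _ C1 C2 HI HI' Sc Sc' Sw Sw' (or_introl Ecc)) as [_ [_ E]].
        apply (proj1 (proj2 (proj2 (proj2 HI))) u v u' v' Huv (proj2 (E u' v') Huv')).
      * destruct (hmem _ _ _ _ _ _ _ _ _ _ _ _ _ C1 C2 HI Huv) as [[_ Bc] [_ Bw]].
        destruct (hmem _ _ _ _ _ _ _ _ _ _ _ _ _ C1 C2 HI' Huv') as [[_ Bc'] [_ Bw']].
        split; intro X; exfalso; apply Ncc.
        -- exact (disjoint _ _ _ _ C1 y c c' u Sc Sc' Bc (belowS _ _ _ _ _ X Bc')).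
        -- pose proof (disjoint _ _ _ _ C2 z w w' v Sw Sw' Bw (belowS _ _ _ _ _ X Bw')) as Eww.
           destruct (uniq_U _ _ _ _ _ _ _ _ _ _ _ _ _ _ _ _ C1 C2 HI HI' Sc Sc' Sw Sw' (or_intror Eww)) as [E _].
           exact E.
  - apply K; left; auto.
  - refine (conj _ (conj _ (conj _ _))).
    + intros t [v A]. apply K in A. destruct A as [[Et _]|(c&w&H&Sc&Sw&CH&HI&Huv)].
      * subst t; auto.
      * exact (proj1 (proj1 (hmem _ _ _ _ _ _ _ _ _ _ _ _ _ C1 C2 HI Huv))).
    + exists z. apply K; left; auto.
    + intros u u' X [v' A]. apply K in A. destruct A as [[Eu _]|(c&w&H&Sc&Sw&CH&HI&Huv)].
      * subst u'. destruct (IHc u X) as [H [CH [HI Sh]]]. exists (h u). apply K. right.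
        exists u, (h u), H. refine (conj X (conj Sh (conj CH (conj HI _)))).
        exact (proj1 (proj2 (proj2 (proj2 (proj2 HI))))).
      * pose proof (proj1 (proj2 (proj2 (proj2 (proj2 (proj2 HI)))))) as DO1.
        destruct (proj1 (proj2 (proj2 DO1)) u u' X (ex_intro _ v' Huv)) as [v0 Hv0].
        exists v0. apply K. right. exists c, w, H. auto.
    + intros u [v A] Hne. apply K in A. destruct A as [[Eu _]|(c&w&H&Sc&Sw&CH&HI&Huv)].
      * contradiction.
      * destruct (classic (u = c)) as [->|Nuc].
        -- exists y. split; auto. exists z. apply K; left; auto.
        -- pose proof (proj1 (proj2 (proj2 (proj2 (proj2 (proj2 HI)))))) as DO1.
           destruct (proj2 (proj2 (proj2 DO1)) u (ex_intro _ v Huv) Nuc) as [v0 [[v1 Hv1] Sv0]].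
           exists v0. split; auto. exists v1. apply K. right. exists c, w, H. auto.
  - refine (conj _ (conj _ (conj _ _))).
    + intros t [u A]. apply K in A. destruct A as [[_ Et]|(c&w&H&Sc&Sw&CH&HI&Huv)].
      * subst t; auto.
      * exact (proj1 (proj2 (hmem _ _ _ _ _ _ _ _ _ _ _ _ _ C1 C2 HI Huv))).
    + exists y. apply K; left; auto.
    + intros v v' X [u' A]. apply K in A. destruct A as [[Eu Ev]|(c&w&H&Sc&Sw&CH&HI&Huv)].
      * subst v'. destruct (endp _ _ _ _ C2 _ _ X) as [Nv _].
        assert (Dv : sub M N2 (crel M mem R2) z v) by (split; auto; econstructor; [exact X|constructor]).
        destruct (proj1 (proj2 (proj2 Hh)) v Dv) as [x [Dx Ex]].
        assert (Sx : crel M mem R1 x y).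
        { apply (proj2 (proj2 (proj2 (proj2 Hh)) x y Dx Dy)). rewrite Ex, hyz. exact X. }
        destruct (IHc x Sx) as [H [CH [HI Sh]]]. exists x. apply K. right.
        exists x, (h x), H. refine (conj Sx (conj Sh (conj CH (conj HI _)))).
        rewrite <- Ex. exact (proj1 (proj2 (proj2 (proj2 (proj2 HI))))).
      * pose proof (proj2 (proj2 (proj2 (proj2 (proj2 (proj2 HI)))))) as DO2.
        destruct (proj1 (proj2 (proj2 DO2)) v v' X (ex_intro _ u' Huv)) as [u0 Hu0].
        exists u0. apply K. right. exists c, w, H. auto.
    + intros v [u A] Hne. apply K in A. destruct A as [[_ Ev]|(c&w&H&Sc&Sw&CH&HI&Huv)].
      * contradiction.
      * destruct (classic (v = w)) as [->|Nvw].
        -- exists z. split; auto. exists y. apply K; left; auto.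
        -- pose proof (proj2 (proj2 (proj2 (proj2 (proj2 (proj2 HI)))))) as DO2.
           destruct (proj2 (proj2 (proj2 DO2)) v (ex_intro _ u Huv) Nvw) as [v0 [[u1 Hu1] Sv0]].
           exists v0. split; auto. exists u1. apply K. right. exists c, w, H. auto.
Qed.

Lemma wf_ind_tw M Q (P : M -> Prop) : truly_wf M Q ->
  (forall y, (forall c, Q c y -> P c) -> P y) -> forall y, P y.
Proof.
  intros Hwf Hst y. apply NNPP; intros Hn.
  destruct (Hwf (fun t => ~ P t) (ex_intro _ y Hn)) as [x [Hx Hmin]].
  apply Hx, Hst. intros c Qc. apply NNPP; intros Hc. exact (Hmin c Hc Qc).
Qed.

Lemma sub_root M N Q a : CP M N Q a -> forall x, sub M N Q a x <-> N x.
Proof.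
  intros HC x; split; [intros [H _]; auto|]. intros Hx. split; auto.
  destruct (has_dist _ _ _ _ HC x Hx) as [n Hn]. eapply below_of_dist; eauto.
Qed.

Theorem lemma9 (M : Type) (mem : M -> M -> Prop) (C : (M -> Prop) -> Prop)
  (HMK : mkstar_model M mem C) (Hbeta : beta_model M mem C)
  (N1 N2 R1 R2 : M -> Prop)
  (HN1 : C N1) (HN2 : C N2) (HR1 : C R1) (HR2 : C R2)
  (Hwf1 : truly_wf M (crel M mem R1)) (Hwf2 : truly_wf M (crel M mem R2))
  (Hcp1 : coding_pair M mem C N1 R1) (Hcp2 : coding_pair M mem C N2 R2)
  (Hiso : isomorphic M N1 (crel M mem R1) N2 (crel M mem R2)) :
  iso_in_C M mem C N1 R1 N2 R2.
Proof.
  destruct HMK as (Hzfc & _ & _ & _ & Hcomp & _ & _).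
  destruct (zfc_pair _ _ _ Hzfc) as [HP HE].
  destruct (CP_of _ _ _ _ _ HP Hcp1) as [a1 C1].
  destruct (CP_of _ _ _ _ _ HP Hcp2) as [a2 C2].
  assert (Hall : forall t, Qp M mem C N1 R1 N2 R2 t).
  { apply (wf_ind_tw _ _ _ Hwf1). intros y IH.
    exact (step M mem C Hcomp N1 R1 a1 N2 R2 a2 HP HE HN1 HR1 HN2 HR2 C1 C2 y IH). }
  destruct Hiso as [f Hf].
  pose proof (sub_root _ _ _ _ C1) as E1. pose proof (sub_root _ _ _ _ C2) as E2.
  assert (Hf' := iso_ext _ _ _ _ _ _ _ f (fun x => iff_sym (E1 x)) (fun x => iff_sym (E2 x)) Hf).
  destruct (Hall a1 (proj1 C1) a2 f (proj1 C2) Hf') as [H [CH HI]].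
  destruct (isosub_fun _ _ _ _ _ _ _ _ _ _ _ C1 C2 HI) as [g [Hg Hgc]].
  exists H. split; [exact CH|]. split; [exact (proj1 HI)|].
  exists g. split.
  - exact (iso_ext _ _ _ _ _ _ _ g E1 E2 Hg).
  - intros x y. rewrite Hgc, E1. tauto.
Qed.
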